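(* Let $\Gamma$ be any finite simplicial graph. If $(x,y\mid z)$ is a SIL with $x\le z$, then $(z,y\mid x)$ is also a SIL.
   Context: $\mathrm{lk}(u)$ = neighbours of $u$, $\mathrm{st}(u)=\mathrm{lk}(u)\cup\{u\}$; $u\le v$ iff $\mathrm{lk}(u)\subseteq\mathrm{st}(v)$. A SIL is a triple $(x,y\mid z)$ of pairwise non-adjacent vertices such that the connected component of $\Gamma\setminus(\mathrm{lk}(x)\cap\mathrm{lk}(y))$ containing $z$ contains neither $x$ nor $y$. *)

(* Defs.v *)
From mathcomp Require Import all_boot.
Set Implicit Arguments. Unset Strict Implicit. Unset Printing Implicit Defensive.

Definition simple_graph (T : finType) (e : rel T) : Prop :=
  symmetric e /\ irreflexive e.

Definition lk (T : finType) (e : rel T) (u : T) : {set T} := [set v | e u v].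
Definition st (T : finType) (e : rel T) (u : T) : {set T} := u |: lk e u.

Definition vle (T : finType) (e : rel T) (u v : T) : bool :=
  lk e u \subset st e v.

Definition del_rel (T : finType) (e : rel T) (S : {set T}) : rel T :=
  [rel a b | [&& e a b, a \notin S & b \notin S]].

(* the connected component of Γ \ S containing z (empty if z ∈ S) *)
Definition comp_of (T : finType) (e : rel T) (S : {set T}) (z : T) : {set T} :=
  [set w | [&& z \notin S, w \notin S & connect (del_rel e S) z w]].

Definition SIL (T : finType) (e : rel T) (x y z : T) : Prop :=
  [/\ x != y, x != z, y != z,
      [/\ ~~ e x y, ~~ e x z & ~~ e y z] &
      let C := comp_of e (lk e x :&: lk e y) z in
      x \notin C /\ y \notin C].

(* Main.v *)
Require Import Defs.
From mathcomp Require Import all_boot.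

Theorem lemma3p12 (T : finType) (e : rel T) (x y z : T) :
  simple_graph e -> SIL e x y z -> vle e x z -> SIL e z y x.
Proof.
move=> [esym eirr] [nxy nxz nyz [exy exz eyz] /= [xC yC]] hle.
have key : forall w, w != x ->
  w \notin comp_of e (lk e z :&: lk e y) x.
  move=> w nwx; apply/negP; rewrite inE => /and3P [_ _ /connectP [p]].
  case: p => [|v1 p] /=; first by move=> _ wx; move: nwx; rewrite wx eqxx.
  move=> /andP [/and3P [exv1 _ v1S] _] _.
  have v1z : e z v1.
    have : v1 \in lk e x by rewrite inE.
    move/(subsetP hle); rewrite !inE => /orP [/eqP ev|]; last by rewrite esym.
    by move: exz; rewrite -ev exv1.
  have v1y : ~~ e y v1.
    by move: v1S; rewrite !inE v1z /= esym.
  move/negP: xC; apply; rewrite inE; apply/and3P; split.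
  - by rewrite !inE (negbTE exz).
  - by rewrite !inE /= eirr.
  apply: (@connect_trans _ _ v1); apply: connect1; rewrite /del_rel /= !inE.
  - by rewrite v1z (negbTE exz) (negbTE v1y) andbF.
  - by rewrite esym exv1 eirr (negbTE v1y) andbF.
split.
- by rewrite eq_sym.
- by rewrite eq_sym.
- by rewrite eq_sym.
- by split; rewrite esym.
- by split; apply: key; rewrite ?nxz // eq_sym.
Qed.
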